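(* Let $G$ be a positively $0$-transitive Lie superalgebra whose positive part $G_+$ is generated by $G_1$, and let $U$ be the universal Lie superalgebra associated to $U_1:=G_1$. (a) There exist a subspace $T_{0-}\subseteq U_{0-}$ such that $T_{0-}\oplus U_+$ is a subalgebra of $U$ (in particular $T_{0-}$ is a subalgebra of $U_{0-}$), and an ideal $D_{2+}$ of $T_{0-}\oplus U_+$ contained in $U_{2+}$, such that $G\cong(T_{0-}\oplus U_+)/D_{2+}$ as Lie superalgebras. (b) Conversely, for any subspace $T_{0-}\subseteq U_{0-}$ such that $T_{0-}\oplus U_+$ is a subalgebra of $U$ and any ideal $D_{2+}$ of $T_{0-}\oplus U_+$ contained in $U_{2+}$, the quotient $(T_{0-}\oplus U_+)/D_{2+}$ is a positively $0$-transitive Lie superalgebra whose positive part is generated by its degree-$1$ subspace.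
   Context: All vector spaces are over $\mathbb{K}=\mathbb{R}$ or $\mathbb{C}$, $\mathbb{Z}$-graded, parity equal to degree mod 2; morphisms preserve degree; subalgebras and ideals are graded. A Lie superalgebra is a graded space with degree-preserving bracket satisfying $[x,y]=-(-1)^{|x||y|}[y,x]$ and $[x,[y,z]]-(-1)^{|x||y|}[y,[x,z]]=[[x,y],z]$. $G_\pm=\bigoplus_{k\ge1}G_{\pm k}$, $G_{p-}=\bigoplus_{k\le p}G_k$, $G_{p+}=\bigoplus_{k\ge p}G_k$. $G$ is positively $0$-transitive if for $x\in G_{0-}$, $[G_+,x]=0$ implies $x=0$. Universal Lie superalgebra: for $U_1$ concentrated in degree 1 (odd), put $U_0=\mathrm{End}(U_1)$, $U_{-p+1}=\mathrm{Hom}(U_1,U_{-p+2})$ for $p\ge2$; on $U_{1-}=\bigoplus_{k\le1}U_k$ define brackets recursively by $[x,u]=x(u)$, $[u,x]=-(-1)^{|x|}x(u)$, $[x,y](u)=[x,y(u)]+(-1)^{|y|}[x(u),y]$ ($x,y\in U_{0-}$, $u\in U_1$), giving a semilocal Lie superalgebra (brackets defined when degrees sum to $\le1$); $U$ is the unique Lie superalgebra extending it such that $U_+$ is the free Lie superalgebra generated by $U_1$. *)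

(* Defs.v *)
From HB Require Import structures.
From mathcomp Require Import all_boot all_order all_algebra.
Set Implicit Arguments. Unset Strict Implicit. Unset Printing Implicit Defensive.

Import Order.TTheory GRing.Theory Num.Theory.
Local Open Scope ring_scope.

(* A Z-graded Lie superalgebra over K, presented through its total space
   (the direct sum of its homogeneous components):
   - lsa_car : the total space (a K-vector space),
   - lsa_br  : the (bilinear) bracket,
   - lsa_gr k x : "x is homogeneous of degree k" (x \in A_k). *)
Record lsalg (K : numFieldType) := LSAlg {
  lsa_car :> lmodType K;
  lsa_br : lsa_car -> lsa_car -> lsa_car;
  lsa_gr : int -> lsa_car -> Prop }.
Arguments lsa_br {K} l _ _.
Arguments lsa_gr {K} l _ _.

Section LieSuper.
Variable K : numFieldType.

Definition par (i : int) : bool := odd (absz i).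
Definition ssign (i j : int) : K := (-1) ^+ (par i && par j).

Section OneAlg.
Variable A : lsalg K.
Local Notation br := (lsa_br A).
Local Notation gr := (lsa_gr A).

Definition subspace (P : A -> Prop) : Prop :=
  P 0 /\ forall (a : K) (x y : A), P x -> P y -> P (a *: x + y).

(* v lies in the sum of the homogeneous components of degrees k with p k,
   e.g. hsum (fun k => 0 < k) = A_+, hsum (fun k => k <= 0) = A_{0-}. *)
Definition hsum (p : pred int) (v : A) : Prop :=
  exists (s : seq int) (f : int -> A),
    (forall k, gr k (f k)) /\ v = \sum_(k <- s | p k) f k.

Definition is_lsalg : Prop :=
  (forall (a : K) (x y z : A), br (a *: x + y) z = a *: br x z + br y z) /\
  (forall (a : K) (x y z : A), br x (a *: y + z) = a *: br x y + br x z) /\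
  (forall k, subspace (gr k)) /\
  (* the total space is the direct sum of the A_k *)
  (forall v : A, hsum predT v) /\
  (forall (s : seq int) (f : int -> A), uniq s -> (forall k, gr k (f k)) ->
     \sum_(k <- s) f k = 0 -> forall k, k \in s -> f k = 0) /\
  (forall (i j : int) (x y : A), gr i x -> gr j y -> gr (i + j) (br x y)) /\
  (forall (i j : int) (x y : A), gr i x -> gr j y ->
     br x y = - (ssign i j *: br y x)) /\
  (forall (i j k : int) (x y z : A), gr i x -> gr j y -> gr k z ->
     br x (br y z) - ssign i j *: br y (br x z) = br (br x y) z).

Definition graded_sub (P : A -> Prop) : Prop :=
  subspace P /\
  forall v, P v -> exists (s : seq int) (f : int -> A),
    (forall k, gr k (f k) /\ P (f k)) /\ v = \sum_(k <- s) f k.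

Definition subalg (S : A -> Prop) : Prop :=
  graded_sub S /\ forall x y, S x -> S y -> S (br x y).

Definition ideal_in (S D : A -> Prop) : Prop :=
  graded_sub D /\ (forall x, D x -> S x) /\
  (forall x y, S x -> D y -> D (br x y)) /\
  (forall x y, D x -> S y -> D (br x y)).

Inductive gen_by (X : A -> Prop) : A -> Prop :=
| gen_in x : X x -> gen_by X x
| gen_zero : gen_by X 0
| gen_lin (a : K) x y : gen_by X x -> gen_by X y -> gen_by X (a *: x + y)
| gen_br x y : gen_by X x -> gen_by X y -> gen_by X (br x y).

Definition pos0trans : Prop :=
  forall x, hsum (fun k => k <= 0) x ->
    (forall y, hsum (fun k => 0 < k) y -> br y x = 0) -> x = 0.

Definition gen_deg1 : Prop :=
  forall v, hsum (fun k => 0 < k) v -> gen_by (gr 1) v.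

End OneAlg.






Definition lin_on (A B : lsalg K) (P : A -> Prop) (f : A -> B) : Prop :=
  forall (a : K) (x y : A), P x -> P y -> f (a *: x + y) = a *: f x + f y.

(* The universal Lie superalgebra U associated to U_1, characterized up to
   isomorphism:
   (i) for k <= 0, x |-> ([x, .] restricted to U_1) is a linear bijection
       U_k -> Hom(U_1, U_{k+1})  (this is U_0 = End(U_1),
       U_{-p+1} = Hom(U_1, U_{-p+2}), the brackets with U_1 being
       [x,u] = x(u); all other brackets in U_{1-} are then forced by
       super skew-symmetry and Jacobi, and coincide with the recursive ones);
   (ii) U_+ is the free Lie superalgebra on U_1 (universal property). *)
Definition universal (U : lsalg K) : Prop :=
  (forall (k : int), k <= 0 ->
     (forall x, lsa_gr U k x -> (forall u, lsa_gr U 1 u -> lsa_br U x u = 0) ->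
        x = 0) /\
     (forall phi : U -> U, lin_on (lsa_gr U 1) phi ->
        (forall u, lsa_gr U 1 u -> lsa_gr U (k + 1) (phi u)) ->
        exists x, lsa_gr U k x /\ forall u, lsa_gr U 1 u -> lsa_br U x u = phi u)) /\
  (forall (L : lsalg K), is_lsalg L ->
     forall f : U -> L, lin_on (lsa_gr U 1) f ->
       (forall u, lsa_gr U 1 u -> lsa_gr L 1 (f u)) ->
       exists g : U -> L,
         [/\ forall u, lsa_gr U 1 u -> g u = f u,
             lin_on (@hsum U (fun k => 0 < k)) g,
             forall x y, @hsum U (fun k => 0 < k) x -> @hsum U (fun k => 0 < k) y ->
               g (lsa_br U x y) = lsa_br L (g x) (g y) &
             forall g' : U -> L,
               (forall u, lsa_gr U 1 u -> g' u = f u) ->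
               lin_on (@hsum U (fun k => 0 < k)) g' ->
               (forall x y, @hsum U (fun k => 0 < k) x -> @hsum U (fun k => 0 < k) y ->
                  g' (lsa_br U x y) = lsa_br L (g' x) (g' y)) ->
               forall x, @hsum U (fun k => 0 < k) x -> g' x = g x]).

Definition iso_deg1 (A B : lsalg K) : Prop :=
  exists i : A -> B,
    [/\ lin_on (lsa_gr A 1) i,
        forall u, lsa_gr A 1 u -> lsa_gr B 1 (i u),
        forall u v, lsa_gr A 1 u -> lsa_gr A 1 v -> i u = i v -> u = v &
        forall w, lsa_gr B 1 w -> exists u, lsa_gr A 1 u /\ i u = w].

Definition TplusUp (U : lsalg K) (T : U -> Prop) : U -> Prop :=
  fun v => exists t w, T t /\ @hsum U (fun k => 0 < k) w /\ v = t + w.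

Definition good_T (U : lsalg K) (T : U -> Prop) : Prop :=
  [/\ graded_sub T, forall v, T v -> @hsum U (fun k => k <= 0) v &
      subalg (TplusUp T)].

(* Q is (isomorphic to) the quotient S / D of the subalgebra S by its ideal D:
   there is a surjective degree-preserving homomorphism of Lie superalgebras
   S -> Q with kernel exactly D. *)
Definition quot_iso (U : lsalg K) (S D : U -> Prop) (Q : lsalg K) : Prop :=
  exists pi : U -> Q,
    [/\ lin_on S pi,
        forall k x, S x -> lsa_gr U k x -> lsa_gr Q k (pi x),
        forall x y, S x -> S y -> pi (lsa_br U x y) = lsa_br Q (pi x) (pi y),
        forall q : Q, exists x, S x /\ pi x = q &
        forall x, S x -> (pi x = 0 <-> D x)].

End LieSuper.

Arguments hsum {K} A p v.

(* Main.v *)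
Require Import Defs.
From HB Require Import structures.
From mathcomp Require Import all_boot all_order all_algebra.
From Stdlib Require Import ClassicalEpsilon FunctionalExtensionality PropExtensionality.
From mathcomp Require Import zify.
Import Order.TTheory GRing.Theory Num.Theory.
Set Implicit Arguments. Unset Strict Implicit. Unset Printing Implicit Defensive.
Local Open Scope ring_scope.

Lemma sum_if_eq (V : nmodType) (t : seq int) (j : int) (F : int -> V) :
  uniq t -> \sum_(m <- t) (if j == m then F m else 0) = if j \in t then F j else 0.
Proof.
elim: t => [|m t IH] /=; first by rewrite big_nil.
case/andP=> mt ut; rewrite big_cons IH // in_cons.
case: (eqVneq j m) => [->|ne] /=; first by rewrite (negbTE mt) addr0.
by rewrite add0r.
Qed.

Lemma regroup (V : nmodType) (u s : seq int) (F : int -> V) :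
  uniq u -> {subset s <= u} ->
  \sum_(m <- u) \sum_(j <- s | j == m) F j = \sum_(j <- s) F j.
Proof.
move=> uu su.
rewrite (eq_bigr (fun m => \sum_(j <- s) (if j == m then F j else 0))); last first.
  by move=> m _; rewrite big_mkcond.
rewrite exchange_big /=; apply: eq_big_seq => j js.
rewrite (eq_bigr (fun m => if j == m then F j else 0)) //.
by rewrite (@sum_if_eq _ _ _ (fun _ => F j)) // su.
Qed.

Section Graded.
Variable K : numFieldType.
Variable A : lsalg K.
Hypothesis HA : is_lsalg A.
Local Notation br := (lsa_br A).
Local Notation gr := (lsa_gr A).

Lemma br_linl a x y z : br (a *: x + y) z = a *: br x z + br y z.
Proof. by case: HA => h _; apply: h. Qed.
Lemma br_linr a x y z : br x (a *: y + z) = a *: br x y + br x z.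
Proof. by case: HA => _ [h _]; apply: h. Qed.
Lemma gr_sub k : subspace (gr k).
Proof. by case: HA => _ [_ [h _]]; apply: h. Qed.
Lemma hsumT v : hsum A predT v.
Proof. by case: HA => _ [_ [_ [h _]]]; apply: h. Qed.
Lemma dsum (s : seq int) (f : int -> A) : uniq s -> (forall k, gr k (f k)) ->
     \sum_(k <- s) f k = 0 -> forall k, k \in s -> f k = 0.
Proof. by case: HA => _ [_ [_ [_ [h _]]]]; apply: h. Qed.
Lemma gr_br i j x y : gr i x -> gr j y -> gr (i + j) (br x y).
Proof. by case: HA => _ [_ [_ [_ [_ [h _]]]]]; apply: h. Qed.
Lemma br_skew i j x y : gr i x -> gr j y -> br x y = - (ssign K i j *: br y x).
Proof. by case: HA => _ [_ [_ [_ [_ [_ [h _]]]]]]; apply: h. Qed.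
Lemma br_jac i j k x y z : gr i x -> gr j y -> gr k z ->
     br x (br y z) - ssign K i j *: br y (br x z) = br (br x y) z.
Proof. by case: HA => _ [_ [_ [_ [_ [_ [_ h]]]]]]; apply: h. Qed.

Lemma br0l z : br 0 z = 0.
Proof. have := br_linl 1 0 0 z; rewrite !scale1r addr0 => h; apply: (@addrI _ (br 0 z)); by rewrite addr0 -h. Qed.
Lemma br0r z : br z 0 = 0.
Proof. have := br_linr 1 z 0 0; rewrite !scale1r addr0 => h; apply: (@addrI _ (br z 0)); by rewrite addr0 -h. Qed.
Lemma brDl x y z : br (x + y) z = br x z + br y z.
Proof. by have := br_linl 1 x y z; rewrite !scale1r. Qed.
Lemma brDr x y z : br z (x + y) = br z x + br z y.
Proof. by have := br_linr 1 z x y; rewrite !scale1r. Qed.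
Lemma brZl a x z : br (a *: x) z = a *: br x z.
Proof. by have := br_linl a x 0 z; rewrite !addr0 br0l addr0. Qed.
Lemma brZr a x z : br z (a *: x) = a *: br z x.
Proof. by have := br_linr a z x 0; rewrite !addr0 br0r addr0. Qed.
Lemma brNl x z : br (- x) z = - br x z.
Proof. by rewrite -scaleN1r brZl scaleN1r. Qed.
Lemma brNr x z : br z (- x) = - br z x.
Proof. by rewrite -scaleN1r brZr scaleN1r. Qed.
Lemma brBl x y z : br (x - y) z = br x z - br y z.
Proof. by rewrite brDl brNl. Qed.
Lemma brBr x y z : br z (x - y) = br z x - br z y.
Proof. by rewrite brDr brNr. Qed.
Lemma br_suml I (r : seq I) (P : pred I) (F : I -> A) z :
  br (\sum_(i <- r | P i) F i) z = \sum_(i <- r | P i) br (F i) z.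
Proof. by apply: (big_morph (fun x => br x z)) => [x y|]; rewrite ?brDl ?br0l. Qed.
Lemma br_sumr I (r : seq I) (P : pred I) (F : I -> A) z :
  br z (\sum_(i <- r | P i) F i) = \sum_(i <- r | P i) br z (F i).
Proof. by apply: (big_morph (fun x => br z x)) => [x y|]; rewrite ?brDr ?br0r. Qed.

Lemma sub0 (P : A -> Prop) : subspace P -> P 0. Proof. by case. Qed.
Lemma subD (P : A -> Prop) x y : subspace P -> P x -> P y -> P (x + y).
Proof. by case=> _ h hx hy; have := h 1 x y hx hy; rewrite scale1r. Qed.
Lemma subZ (P : A -> Prop) a x : subspace P -> P x -> P (a *: x).
Proof. by case=> h0 h hx; have := h a x 0 hx h0; rewrite addr0. Qed.
Lemma subN (P : A -> Prop) x : subspace P -> P x -> P (- x).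
Proof. by move=> sP hx; rewrite -scaleN1r; apply: subZ. Qed.
Lemma subB (P : A -> Prop) x y : subspace P -> P x -> P y -> P (x - y).
Proof. by move=> sP hx hy; apply: subD => //; apply: subN. Qed.
Lemma sub_sum (P : A -> Prop) I (r : seq I) (Q : pred I) (F : I -> A) :
  subspace P -> (forall i, Q i -> P (F i)) -> P (\sum_(i <- r | Q i) F i).
Proof.
move=> sP h; elim: r => [|i r IH]; first by rewrite big_nil; apply: sub0.
rewrite big_cons; case: ifP => qi //; apply: subD => //; exact: h.
Qed.

Lemma gr0 k : gr k 0. Proof. exact: sub0 (gr_sub k). Qed.
Lemma grD k x y : gr k x -> gr k y -> gr k (x + y). Proof. exact: subD (gr_sub k). Qed.
Lemma grZ k a x : gr k x -> gr k (a *: x). Proof. exact: subZ (gr_sub k). Qed.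
Lemma grN k x : gr k x -> gr k (- x). Proof. exact: subN (gr_sub k). Qed.
Lemma grB k x y : gr k x -> gr k y -> gr k (x - y). Proof. exact: subB (gr_sub k). Qed.

Lemma gr_sum_eq (s : seq int) (f : int -> A) k : (forall j, gr j (f j)) ->
  gr k (\sum_(j <- s | j == k) f j).
Proof. by move=> h; apply: sub_sum (gr_sub k) _ => j /eqP <-. Qed.

Definition pick_dec (v : A) : seq int * (int -> A) :=
  epsilon (inhabits ([::], fun _ => 0))
    (fun sf => (forall k, gr k (sf.2 k)) /\ v = \sum_(k <- sf.1) sf.2 k).

Lemma pick_decP v : (forall k, gr k ((pick_dec v).2 k)) /\ v = \sum_(k <- (pick_dec v).1) (pick_dec v).2 k.
Proof.
apply: (epsilon_spec (inhabits ([::], fun _ => 0)) (fun sf : seq int * (int -> A) => (forall k, gr k (sf.2 k)) /\ v = \sum_(k <- sf.1) sf.2 k)).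
have [s [f [h1 h2]]] := hsumT v; by exists (s, f).
Qed.

Definition proj (k : int) (v : A) : A :=
  \sum_(j <- (pick_dec v).1 | j == k) (pick_dec v).2 j.

Lemma proj_gr k v : gr k (proj k v).
Proof. rewrite /proj; have [h1 h2] := pick_decP v; exact: gr_sum_eq. Qed.

Lemma projS (t : seq int) (g : int -> A) k : uniq t -> (forall m, gr m (g m)) ->
  proj k (\sum_(m <- t) g m) = if k \in t then g k else 0.
Proof.
move=> ut hg; rewrite /proj; have [h1 h2] := pick_decP (\sum_(m <- t) g m).
move: h1 h2; case: (pick_dec _) => s0 f0 /= h1 h2.
set u := undup (t ++ s0).
have uu : uniq u by apply: undup_uniq.
pose H m := (if m \in t then g m else 0) - \sum_(j <- s0 | j == m) f0 j.
have gH m : gr m (H m).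
  apply: grB; last exact: gr_sum_eq.
  by case: ifP => _; [apply: hg | apply: gr0].
have sH : \sum_(m <- u) H m = 0.
  rewrite /H sumrB regroup //; last by move=> j js; rewrite mem_undup mem_cat js orbT.
  rewrite -big_mkcond /= -big_filter -h2 (perm_big t) ?subrr //.
  apply: uniq_perm; [exact: filter_uniq | exact: ut |] => m.
  by rewrite mem_filter mem_undup mem_cat; case: (m \in t).
have [ku|ku] := boolP (k \in u).
  by have := dsum uu gH sH ku; rewrite /H => /eqP; rewrite subr_eq0 => /eqP.
move: ku; rewrite mem_undup mem_cat negb_or => /andP[kt ks].
rewrite (negbTE kt) big1_seq // => j /andP[/eqP -> js].
by rewrite js in ks.
Qed.

Lemma proj_hom j k x : gr j x -> proj k x = if k == j then x else 0.
Proof.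
move=> hx; pose g m := if m == j then x else 0.
have hg m : gr m (g m) by rewrite /g; case: eqP => [->|_] //; apply: gr0.
have := projS k (t := [:: j]) (g := g) erefl hg.
rewrite big_seq1 inE /g eqxx => ->; by case: (k == j).
Qed.

Lemma proj_self k x : gr k x -> proj k x = x.
Proof. by move=> h; rewrite (proj_hom k h) eqxx. Qed.
Lemma proj_other j k x : gr j x -> k != j -> proj k x = 0.
Proof. by move=> h ne; rewrite (proj_hom k h) (negbTE ne). Qed.

Lemma decomp v : exists t, [/\ uniq t, forall m, m \notin t -> proj m v = 0 &
   v = \sum_(m <- t) proj m v].
Proof.
exists (undup (pick_dec v).1); split; first exact: undup_uniq.
  move=> m; rewrite mem_undup /proj => ms; rewrite big1_seq // => j /andP[/eqP -> js].
  by rewrite js in ms.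
rewrite /proj; have [h1 h2] := pick_decP v; move: h1 h2.
case: (pick_dec v) => s f /= h1 h2.
by rewrite regroup ?undup_uniq // => j; rewrite mem_undup.
Qed.

Lemma sum_supp (V : nmodType) (t t0 : seq int) (F : int -> V) :
  uniq t -> uniq t0 -> {subset t0 <= t} -> (forall m, m \notin t0 -> F m = 0) ->
  \sum_(m <- t) F m = \sum_(m <- t0) F m.
Proof.
move=> ut ut0 sub h.
rewrite (bigID (fun m => m \in t0)) /= [X in _ + X]big1 ?addr0; last by move=> m /h.
rewrite -big_filter; apply: perm_big; apply: uniq_perm; [exact: filter_uniq| done|].
by move=> m; rewrite mem_filter; case e: (m \in t0) => //=; rewrite sub.
Qed.

Lemma decomp_any v t : uniq t -> (forall m, m \notin t -> proj m v = 0) ->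
  v = \sum_(m <- t) proj m v.
Proof.
move=> ut ht; have [t0 [ut0 h0 ->]] := decomp v.
set w := \sum_(m <- t0) proj m v.
have -> : \sum_(m <- t) proj m w = \sum_(m <- t) proj m v.
  apply: eq_bigr => m _; rewrite /w projS //; last by move=> n; apply: proj_gr.
  by case: ifP => // /negbT /h0 ->.
rewrite /w; transitivity (\sum_(m <- undup (t ++ t0)) proj m v).
  symmetry; apply: sum_supp; rewrite ?undup_uniq //.
  by move=> m; rewrite mem_undup mem_cat => ->; rewrite orbT.
apply: sum_supp; rewrite ?undup_uniq //.
by move=> m; rewrite mem_undup mem_cat => ->.
Qed.

Lemma proj_ext x y : (forall k, proj k x = proj k y) -> x = y.
Proof.
move=> h; have [tx [utx hx ex]] := decomp x; have [ty [uty hy ey]] := decomp y.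
set t := undup (tx ++ ty).
have ut : uniq t := undup_uniq _.
have -> := decomp_any ut (v := x).
  have -> := decomp_any ut (v := y).
    by apply: eq_bigr => m _.
  by move=> m; rewrite mem_undup mem_cat negb_or => /andP[_ /hy].
by move=> m; rewrite mem_undup mem_cat negb_or => /andP[/hx].
Qed.

End Graded.

Section Graded2.
Variable K : numFieldType.
Variable A : lsalg K.
Hypothesis HA : is_lsalg A.
Local Notation br := (lsa_br A).
Local Notation gr := (lsa_gr A).
Local Notation proj := (@proj K A).

Lemma proj_lin k a x y : proj k (a *: x + y) = a *: proj k x + proj k y.
Proof.
have [tx [utx hx _]] := decomp HA x; have [ty [uty hy _]] := decomp HA y.
set t := undup (tx ++ ty); have ut : uniq t := undup_uniq _.
have ex : x = \sum_(m <- t) proj m x.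
  by apply: decomp_any => // m; rewrite mem_undup mem_cat negb_or => /andP[/hx].
have ey : y = \sum_(m <- t) proj m y.
  by apply: decomp_any => // m; rewrite mem_undup mem_cat negb_or => /andP[_ /hy].
rewrite {1}ex {1}ey scaler_sumr -big_split /= (projS HA) //; last first.
  by move=> m; apply: (grD HA); [apply: (grZ HA)|]; apply: (proj_gr HA).
case: ifP => // /negbT; rewrite mem_undup mem_cat negb_or => /andP[/hx -> /hy ->].
by rewrite scaler0 addr0.
Qed.

Lemma proj0 k : proj k 0 = 0.
Proof. by rewrite (proj_hom HA k (gr0 HA (k + 1))); case: ifP. Qed.
Lemma projD k x y : proj k (x + y) = proj k x + proj k y.
Proof. by have := proj_lin k 1 x y; rewrite !scale1r. Qed.
Lemma projZ k a x : proj k (a *: x) = a *: proj k x.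
Proof. by have := proj_lin k a x 0; rewrite !addr0 proj0 addr0. Qed.
Lemma projN k x : proj k (- x) = - proj k x.
Proof. by rewrite -scaleN1r projZ scaleN1r. Qed.
Lemma projB k x y : proj k (x - y) = proj k x - proj k y.
Proof. by rewrite projD projN. Qed.
Lemma proj_sum k I (r : seq I) (P : pred I) (F : I -> A) :
  proj k (\sum_(i <- r | P i) F i) = \sum_(i <- r | P i) proj k (F i).
Proof. by apply: (big_morph (proj k)) => [x y|]; rewrite ?projD ?proj0. Qed.
Lemma proj_proj j k v : proj j (proj k v) = if j == k then proj k v else 0.
Proof. by rewrite (proj_hom HA j (proj_gr HA k v)). Qed.

Lemma gr_of_proj k x : (forall j, j != k -> proj j x = 0) -> gr k x.
Proof.
move=> h; have := decomp_any HA (v := x) (t := [:: k]) erefl.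
rewrite big_seq1 => ->; first exact: proj_gr.
by move=> m; rewrite inE => /h.
Qed.

Lemma hsumP (p : pred int) v : hsum A p v <-> (forall k, ~~ p k -> proj k v = 0).
Proof.
split.
  case=> s [f [hf ->]] k nk; rewrite proj_sum big1 // => j pj.
  rewrite (proj_hom HA k (hf j)); case: eqP => // e.
  by move: nk; rewrite e pj.
move=> h; have [t [ut ht ev]] := decomp HA v.
exists t, (fun m => proj m v); split; first by move=> k; apply: proj_gr.
rewrite {1}ev (bigID p) /= [X in _ + X]big1 ?addr0 // => m /h.
Qed.

Lemma hsum_gr (p : pred int) k x : gr k x -> p k -> hsum A p x.
Proof.
move=> hx pk; apply/hsumP => j nj; apply: (proj_other HA hx).
by apply/eqP => e; move: nj; rewrite e pk.
Qed.

Lemma hsum_sub (p : pred int) : subspace (hsum A p).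
Proof.
split; first by apply/hsumP => k _; rewrite proj0.
move=> a x y /hsumP hx /hsumP hy; apply/hsumP => k nk.
by rewrite proj_lin hx // hy // scaler0 addr0.
Qed.

Lemma graded_proj (P : A -> Prop) k v : graded_sub P -> P v -> P (proj k v).
Proof.
case=> sP gP /gP [s [f [hf ->]]]; rewrite proj_sum; apply: sub_sum => // j _.
have [g1 p1] := hf j; rewrite (proj_hom HA k g1); case: ifP => // _; exact: sub0.
Qed.

Lemma graded_of_proj (P : A -> Prop) : subspace P ->
  (forall v k, P v -> P (proj k v)) -> graded_sub P.
Proof.
move=> sP hP; split=> // v Pv; have [t [ut ht ev]] := decomp HA v.
exists t, (fun m => proj m v); split=> // k; split; [exact: proj_gr | exact: hP].
Qed.

Lemma homog_ind (P : A -> Prop) (Q : A -> Prop) : subspace Q ->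
  (forall k v, P v -> Q (proj k v)) -> forall v, P v -> Q v.
Proof.
move=> sQ h v Pv; have [t [ut ht ->]] := decomp HA v.
by apply: sub_sum => // m _; apply: h.
Qed.

End Graded2.

Section Maps.
Variable K : numFieldType.
Variables A B : lsalg K.
Hypothesis HA : is_lsalg A.
Hypothesis HB : is_lsalg B.

Lemma lin0 (P : A -> Prop) (phi : A -> B) : lin_on P phi -> P 0 -> phi 0 = 0.
Proof.
move=> h P0; have := h 1 0 0 P0 P0; rewrite !scale1r addr0 => e.
by apply: (@addrI _ (phi 0)); rewrite addr0 -e.
Qed.

Lemma linD (P : A -> Prop) (phi : A -> B) x y : lin_on P phi -> P x -> P y ->
  phi (x + y) = phi x + phi y.
Proof. by move=> h px py; have := h 1 x y px py; rewrite !scale1r. Qed.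

Lemma linZ (P : A -> Prop) (phi : A -> B) a x : lin_on P phi -> P 0 -> P x ->
  phi (a *: x) = a *: phi x.
Proof. by move=> h p0 px; have := h a x 0 px p0; rewrite !addr0 (lin0 h p0) addr0. Qed.

Lemma lin_sum (P : A -> Prop) (phi : A -> B) I (r : seq I) (Q : pred I) (F : I -> A) :
  subspace P -> lin_on P phi -> (forall i, Q i -> P (F i)) ->
  phi (\sum_(i <- r | Q i) F i) = \sum_(i <- r | Q i) phi (F i).
Proof.
move=> sP h hF; elim: r => [|i r IH]; first by rewrite !big_nil (lin0 h (sub0 sP)).
rewrite !big_cons; case: ifP => qi //.
by rewrite (linD h) ?IH //; [apply: hF | apply: sub_sum].
Qed.

Lemma proj_map (P : A -> Prop) (phi : A -> B) k x :
  graded_sub P -> lin_on P phi ->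
  (forall j y, P y -> lsa_gr A j y -> lsa_gr B j (phi y)) -> P x ->
  proj k (phi x) = phi (proj k x).
Proof.
move=> gP h hd Px; have sP := gP.1.
have [t [ut ht ev]] := decomp HA x.
rewrite {1}ev (lin_sum _ sP h); last by move=> m _; apply: graded_proj.
rewrite projS //; last by move=> m; apply: hd; [apply: graded_proj | apply: proj_gr].
case: ifP => // /negbT /ht ->; by rewrite (lin0 h (sub0 sP)).
Qed.

End Maps.

Definition pb (P : Prop) : bool := if excluded_middle_informative P then true else false.
Lemma pbP P : reflect P (pb P).
Proof. rewrite /pb; case: excluded_middle_informative => h; by constructor. Qed.

Section Hgen.
Variable K : numFieldType.
Variable U : lsalg K.
Local Notation br := (lsa_br U).
Local Notation gr := (lsa_gr U).

Inductive hgen : int -> U -> Prop :=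
| hg1 u : gr 1 u -> hgen 1 u
| hglin k a x y : hgen k x -> hgen k y -> hgen k (a *: x + y)
| hgbr i j x y : hgen i x -> hgen j y -> hgen (i + j) (br x y).

Definition hgen0 k x := hgen k x \/ x = 0.

Hypothesis HU : is_lsalg U.

Lemma hgen_gr k x : hgen k x -> gr k x /\ 0 < k.
Proof.
elim=> [u hu|k' a x' y' _ [g1 p1] _ [g2 _]|i j x' y' _ [g1 p1] _ [g2 p2]].
- by [].
- by split=> //; apply: (grD HU); [apply: (grZ HU)|].
- by split; [apply: (gr_br HU) | apply: addr_gt0].
Qed.

Lemma hgen0_gr k x : hgen0 k x -> gr k x.
Proof. by case=> [/hgen_gr[]|->] //; apply: (gr0 HU). Qed.

Lemma hgen0_lin k a x y : hgen0 k x -> hgen0 k y -> hgen0 k (a *: x + y).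
Proof.
case=> [hx|->]; case=> [hy|->].
- by left; apply: hglin.
- left; have -> : a *: x + 0 = a *: x + ((-1) *: x + x) by rewrite scaleN1r addNr.
  by apply: hglin => //; apply: hglin.
- by left; rewrite scaler0 add0r.
- by right; rewrite scaler0 addr0.
Qed.

Lemma hgen0_br i j x y : hgen0 i x -> hgen0 j y -> hgen0 (i + j) (br x y).
Proof.
case=> [hx|->]; last by right; rewrite (br0l HU).
case=> [hy|->]; last by right; rewrite (br0r HU).
by left; apply: hgbr.
Qed.

Definition Pgen (v : U) := forall k, hgen0 k (proj k v).

Lemma Pgen_sub : subspace Pgen.
Proof.
split; first by move=> k; rewrite (proj0 HU); right.
by move=> a x y hx hy k; rewrite (proj_lin HU); apply: hgen0_lin.
Qed.

Lemma Pgen_hom k x : hgen0 k x -> Pgen x.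
Proof.
move=> h j; rewrite (proj_hom HU j (hgen0_gr h)); case: eqP => [->|_] //; by right.
Qed.

Lemma Pgen_proj k v : Pgen v -> hgen0 k (proj k v).
Proof. by []. Qed.

Lemma Pgen_br x y : Pgen x -> Pgen y -> Pgen (br x y).
Proof.
move=> hx hy.
have [tx [_ _ ex]] := decomp HU x; have [ty [_ _ ey]] := decomp HU y.
rewrite ex ey (br_suml HU); apply: sub_sum; first exact: Pgen_sub; move=> i _.
rewrite (br_sumr HU); apply: sub_sum; first exact: Pgen_sub; move=> j _.
apply: (@Pgen_hom (i + j)); exact: hgen0_br.
Qed.

Definition Pp : {pred U} := fun v => pb (Pgen v).
Lemma Pp_closed : subsemimod_closed Pp.
Proof.
have [P0 Plin] := Pgen_sub.
split; first split.
- by apply/pbP.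
- move=> x y /pbP hx /pbP hy; apply/pbP. by have := Plin 1 x y hx hy; rewrite scale1r.
- move=> a x /pbP hx; apply/pbP. by have := Plin a x 0 hx P0; rewrite addr0.
Qed.
HB.instance Definition _ := GRing.isSubmodClosed.Build K U Pp Pp_closed.
Definition Sty := {x : U | Pp x}.
HB.instance Definition _ := [isSub of Sty for (@sval U Pp)].
HB.instance Definition _ := [Choice of Sty by <:].
HB.instance Definition _ := [SubChoice_isSubLmodule of Sty by <:].

Lemma valL a (x y : Sty) : val (a *: x + y) = a *: val x + val y.
Proof. by []. Qed.
Lemma val0L : val (0 : Sty) = 0. Proof. by []. Qed.
Lemma val_sumL I (r : seq I) (Q : pred I) (F : I -> Sty) :
  val (\sum_(i <- r | Q i) F i) = \sum_(i <- r | Q i) val (F i).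
Proof. by apply: (big_morph val) => [x y|] //. Qed.
Lemma PgenS (x : Sty) : Pgen (val x).
Proof. exact/pbP/(valP x). Qed.

Definition brS (x y : Sty) : Sty :=
  exist _ (br (val x) (val y)) (introT (pbP _) (Pgen_br (PgenS x) (PgenS y))).
Definition grS k (x : Sty) := hgen0 k (val x).
Definition LS : lsalg K := @LSAlg K Sty brS grS.

Lemma insubdS v : Pgen v -> val (insubd (0 : Sty) v) = v.
Proof. by move=> h; rewrite insubdK //; apply/pbP. Qed.

Lemma LS_is : is_lsalg LS.
Proof.
split; [|split; [|split; [|split; [|split; [|split; [|split]]]]]].
- by move=> a x y z; apply: val_inj => /=; rewrite (br_linl HU).
- by move=> a x y z; apply: val_inj => /=; rewrite (br_linr HU).
- move=> k; split; first by right.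
  by move=> a x y hx hy; rewrite /grS /= ?valL; apply: hgen0_lin.
- move=> v; have [t [_ _ ev]] := decomp HU (val v).
  exists t, (fun m => insubd (0 : Sty) (proj m (val v))); split.
    by move=> k; rewrite /= /grS insubdS; [exact: PgenS | exact: (Pgen_hom (PgenS v k))].
  apply: val_inj; rewrite val_sumL {1}ev; apply: eq_bigr => m _.
  by rewrite insubdS //; exact: (Pgen_hom (PgenS v m)).
- move=> s f us hf hs k ks; apply: val_inj.
  have := dsum HU (f := fun k => val (f k)) us _ _ ks; apply.
    by move=> j; apply: hgen0_gr; apply: hf.
  by rewrite -val_sumL hs.
- by move=> i j x y hx hy; apply: hgen0_br.
- move=> i j x y hx hy; apply: val_inj => /=.
  by rewrite (br_skew HU (hgen0_gr hx) (hgen0_gr hy)).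
- move=> i j k x y z hx hy hz; apply: val_inj => /=.
  by rewrite -(br_jac HU (hgen0_gr hx) (hgen0_gr hy) (hgen0_gr hz)).
Qed.

Hypothesis Huniv : universal U.

Lemma gen_pos x : hsum U (fun k => 0 < k) x -> Pgen x.
Proof.
have [_ H2] := Huniv.
pose f := fun v => insubd (0 : Sty) v.
have P1 u : gr 1 u -> Pgen u by move=> hu; apply: (@Pgen_hom 1); left; apply: hg1.
have flin : lin_on (lsa_gr U 1) (f : U -> LS).
  move=> a x' y' hx hy; apply: val_inj; rewrite /= ?valL !insubdS //; try by apply: P1.
  by apply: P1; apply: (grD HU) => //; apply: (grZ HU).
have fdeg : forall u, gr 1 u -> lsa_gr LS 1 (f u).
  by move=> u hu; rewrite /= /grS insubdS; [left; apply: hg1 | apply: P1].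
have [gL [gL1 gLlin gLhom _]] := H2 LS LS_is f flin fdeg.
have [g0 [_ _ _ g0u]] := H2 U HU id (fun a x y _ _ => erefl) (fun u hu => hu).
move=> hx.
have e1 := g0u id (fun _ _ => erefl) (fun a x y _ _ => erefl) (fun x y _ _ => erefl) x hx.
have e2 := g0u (fun x => val (gL x)) _ _ _ x hx.
rewrite -e1 in e2; rewrite -e2; first exact: PgenS.
- by move=> u hu /=; rewrite gL1 // insubdS //; apply: P1.
- by move=> a x' y' h1 h2 /=; rewrite gLlin.
- by move=> x' y' h1 h2 /=; rewrite gLhom.
Qed.

Lemma gen_hom k x : 0 < k -> gr k x -> hgen0 k x.
Proof.
move=> k0 hx; have := gen_pos (hsum_gr HU hx (p := fun k => 0 < k) k0) k.
by rewrite (proj_self HU hx).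
Qed.

End Hgen.

Lemma proj_brl (K : numFieldType) (A : lsalg K) (HA : is_lsalg A) i k a y :
  lsa_gr A i a -> proj (i + k) (lsa_br A a y) = lsa_br A a (proj k y).
Proof.
move=> ha; have [t [ut ht ey]] := decomp HA y.
rewrite {1}ey (br_sumr HA) (proj_sum HA).
rewrite (eq_bigr (fun m => if k == m then lsa_br A a (proj m y) else 0)); last first.
  move=> m _; rewrite (proj_hom HA (i + k) (gr_br HA ha (proj_gr HA m y))).
  by rewrite (inj_eq (addrI i)).
rewrite sum_if_eq //; case: ifP => // /negbT /ht ->; by rewrite (br0r HA).
Qed.

Lemma proj_brr (K : numFieldType) (A : lsalg K) (HA : is_lsalg A) i k a y :
  lsa_gr A i a -> proj (k + i) (lsa_br A y a) = lsa_br A (proj k y) a.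
Proof.
move=> ha; have [t [ut ht ey]] := decomp HA y.
rewrite {1}ey (br_suml HA) (proj_sum HA).
rewrite (eq_bigr (fun m => if k == m then lsa_br A (proj m y) a else 0)); last first.
  move=> m _; rewrite (proj_hom HA (k + i) (gr_br HA (proj_gr HA m y) ha)).
  by rewrite (inj_eq (addIr i)).
rewrite sum_if_eq //; case: ifP => // /negbT /ht ->; by rewrite (br0l HA).
Qed.

Lemma gen_sum (K : numFieldType) (A : lsalg K) (X : A -> Prop) I (r : seq I) (P : pred I) F :
  (forall i, P i -> gen_by X (F i)) -> gen_by X (\sum_(i <- r | P i) F i).
Proof.
move=> h; elim: r => [|i r IH]; first by rewrite big_nil; apply: gen_zero.
rewrite big_cons; case: ifP => // pi.
by have := gen_lin 1 (h i pi) IH; rewrite scale1r.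
Qed.

Section PartB.
Variable K : numFieldType.
Variable U : lsalg K.
Hypothesis HU : is_lsalg U.
Hypothesis Huniv : universal U.
Variables T D : U -> Prop.
Hypothesis gT : good_T T.
Hypothesis iD : ideal_in (TplusUp T) D.
Hypothesis Dpos : forall v, D v -> hsum U (fun k => 2 <= k) v.
Variable Q : lsalg K.
Hypothesis HQ : is_lsalg Q.
Hypothesis qi : quot_iso (TplusUp T) D Q.
Local Notation S := (TplusUp T).

Lemma S_alg : subalg S. Proof. by case: gT. Qed.
Lemma S_gr : graded_sub S. Proof. by case: S_alg. Qed.
Lemma S_br x y : S x -> S y -> S (lsa_br U x y). Proof. by case: S_alg => _; apply. Qed.
Lemma S_pos w : hsum U (fun k => 0 < k) w -> S w.
Proof.
move=> hw; exists 0, w; split=> //; last by rewrite add0r.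
by case: gT => [[[h0 _] _] _ _].
Qed.

Lemma partB : pos0trans Q /\ gen_deg1 Q.
Proof.
have [pi [plin pdeg phom psurj pker]] := qi.
have sS := S_gr.1.
have pi0 : pi 0 = 0 by apply: (lin0 plin); apply: sub0.
have pmap k x : S x -> proj k (pi x) = pi (proj k x).
  by move=> Sx; apply: (proj_map HU HQ k S_gr plin pdeg Sx).
have S1 u : lsa_gr U 1 u -> S u by move=> hu; apply: S_pos; apply: (hsum_gr HU hu).
split.
- move=> x hx hy; apply: (proj_ext HQ) => k; rewrite (proj0 HQ).
  have [k0|k0] := lerP k 0; last first.
    by move/(hsumP HQ): hx; apply; rewrite /= -ltNge.
  set q := proj k x.
  have [s [Ss es]] := psurj q.
  have Ssk : S (proj k s) by apply: (graded_proj HU); [exact: S_gr | exact: Ss].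
  have eq : pi (proj k s) = q by rewrite -pmap // es /q (proj_proj HQ) eqxx.
  have hsk : lsa_gr U k (proj k s) := proj_gr HU k s.
  have hbr u : lsa_gr U 1 u -> lsa_br U u (proj k s) = 0.
    move=> hu.
    have hpu : lsa_gr Q 1 (pi u) by apply: pdeg => //; apply: S1.
    have e0 : lsa_br Q (pi u) q = 0.
      rewrite /q -(proj_brl HQ k x hpu).
      by rewrite hy ?(proj0 HQ) //; apply: (hsum_gr HQ hpu).
    have Dk : D (lsa_br U u (proj k s)).
      by apply/pker; [apply: S_br => //; apply: S1 | rewrite phom ?eq //; apply: S1].
    have := Dpos Dk; move/(hsumP HU) => /(_ (1 + k)).
    rewrite (proj_self HU (gr_br HU hu hsk)); apply.
    by rewrite /= -ltNge; lia.
  have [H1 _] := Huniv; have [inj _] := H1 k k0.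
  have -> : q = pi (proj k s) by [].
  rewrite (inj (proj k s) hsk) // => u hu.
  by rewrite (br_skew HU hsk hu) hbr // scaler0 oppr0.
- move=> v hv.
  have [t [_ _ ev]] := decomp HQ v.
  rewrite ev; apply: gen_sum => m _.
  have [m0|m0] := lerP m 0.
    have -> : proj m v = 0 by move/(hsumP HQ): hv; apply; rewrite /= -leNgt.
    exact: gen_zero.
  have [s [Ss es]] := psurj v.
  rewrite -es pmap //.
  have := gen_hom HU Huniv m0 (proj_gr HU m s).
  case=> [hg|->]; last by rewrite pi0; apply: gen_zero.
  have hgS k' y : hgen k' y -> S y.
    by move=> /(hgen_gr HU) [g1 p1]; apply: S_pos; apply: (hsum_gr HU g1).
  elim: hg {ev es} => [u hu|k' a x y h1 IH1 h2 IH2|i j x y h1 IH1 h2 IH2].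
  + by apply: gen_in; apply: pdeg => //; apply: S1.
  + by rewrite plin; [apply: gen_lin | apply: (hgS _ _ h1) | apply: (hgS _ _ h2)].
  + by rewrite phom; [apply: gen_br | apply: (hgS _ _ h1) | apply: (hgS _ _ h2)].
Qed.

End PartB.

Definition lev (k : int) : nat := `|1 - k|%N.

Section PartA.
Variable K : numFieldType.
Variable U : lsalg K.
Hypothesis HU : is_lsalg U.
Hypothesis Huniv : universal U.
Variable G : lsalg K.
Hypothesis HG : is_lsalg G.
Hypothesis pos0 : pos0trans G.
Hypothesis gen1 : gen_deg1 G.
Variables i g : U -> G.
Hypothesis ilin : lin_on (lsa_gr U 1) i.
Hypothesis ideg : forall u, lsa_gr U 1 u -> lsa_gr G 1 (i u).
Hypothesis iinj : forall u v, lsa_gr U 1 u -> lsa_gr U 1 v -> i u = i v -> u = v.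
Hypothesis isurj : forall w, lsa_gr G 1 w -> exists u, lsa_gr U 1 u /\ i u = w.
Hypothesis g1 : forall u, lsa_gr U 1 u -> g u = i u.
Local Notation Up := (hsum U (fun k => 0 < k)).
Hypothesis glin : lin_on Up g.
Hypothesis ghom : forall x y, Up x -> Up y -> g (lsa_br U x y) = lsa_br G (g x) (g y).

Local Notation brU := (lsa_br U).
Local Notation brG := (lsa_br G).
Local Notation grU := (lsa_gr U).
Local Notation grG := (lsa_gr G).

Lemma Up_sub : subspace Up. Proof. exact: hsum_sub HU _. Qed.
Lemma g0 : g 0 = 0. Proof. exact: lin0 glin (sub0 Up_sub). Qed.
Lemma Up_gr k x : 0 < k -> grU k x -> Up x.
Proof. by move=> k0 hx; apply: (hsum_gr HU hx). Qed.
Lemma U1_Up u : grU 1 u -> Up u. Proof. exact: Up_gr. Qed.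

Lemma gdeg k x : 0 < k -> grU k x -> grG k (g x).
Proof.
move=> k0 hx; case: (gen_hom HU Huniv k0 hx) => [h|->]; last by rewrite g0; apply: (gr0 HG).
elim: h {k0 hx} => [u hu|k' a x' y' h1 IH1 h2 IH2|i' j x' y' h1 IH1 h2 IH2].
- by rewrite g1 //; apply: ideg.
- have [gx px] := hgen_gr HU h1; have [gy py] := hgen_gr HU h2.
  rewrite glin; [|exact: Up_gr gx|exact: Up_gr gy].
  by apply: (grD HG) => //; apply: (grZ HG).
- have [gx px] := hgen_gr HU h1; have [gy py] := hgen_gr HU h2.
  by rewrite ghom; [apply: (gr_br HG)|exact: Up_gr gx|exact: Up_gr gy].
Qed.

Lemma Up_br x y : Up x -> Up y -> Up (brU x y).
Proof.
move=> /(hsumP HU) hx /(hsumP HU) hy.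
have [tx [_ _ ex]] := decomp HU x; have [ty [_ _ ey]] := decomp HU y.
rewrite ex ey (br_suml HU); apply: sub_sum; first exact: Up_sub; move=> m _.
rewrite (br_sumr HU); apply: sub_sum; first exact: Up_sub; move=> n _.
have [m0|m0] := lerP m 0; first by rewrite hx ?(br0l HU); [apply: sub0; apply: Up_sub | rewrite /= -leNgt].
have [n0|n0] := lerP n 0; first by rewrite hy ?(br0r HU); [apply: sub0; apply: Up_sub | rewrite /= -leNgt].
apply: (Up_gr (k := m + n)); first exact: addr_gt0.
by apply: (gr_br HU); apply: proj_gr.
Qed.

Lemma gsurj q : hsum G (fun k => 0 < k) q -> exists w, Up w /\ g w = q.
Proof.
move=> /gen1; elim=> [y hy|| a x y _ [w1 [u1 e1]] _ [w2 [u2 e2]] | x y _ [w1 [u1 e1]] _ [w2 [u2 e2]]].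
- have [u [hu <-]] := isurj hy; exists u; split; [exact: U1_Up | exact: g1].
- by exists 0; split; [apply: sub0; apply: Up_sub | exact: g0].
- exists (a *: w1 + w2); split; first by have [_ h] := Up_sub; apply: h.
  by rewrite glin // e1 e2.
- exists (brU w1 w2); split; first exact: Up_br.
  by rewrite ghom // e1 e2.
Qed.

Lemma gsurj_hom k q : 0 < k -> grG k q -> exists w, grU k w /\ g w = q.
Proof.
move=> k0 hq; have [w [uw ew]] := gsurj (hsum_gr HG hq (p := fun k => 0 < k) k0).
exists (proj k w); split; first exact: proj_gr.
have gd j y : Up y -> grU j y -> grG j (g y).
  move=> uy hy; have [j0|j0] := lerP j 0; last exact: gdeg.
  have -> : y = 0.
    by rewrite -(proj_self HU hy); move/(hsumP HU): uy; apply; rewrite /= -leNgt.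
  by rewrite g0; apply: (gr0 HG).
have gUp : graded_sub Up.
  apply: (graded_of_proj HU Up_sub) => v m uv; have [m0|m0] := lerP m 0.
    by move/(hsumP HU): uv => ->; [apply: sub0; apply: Up_sub | rewrite /= -leNgt].
  by apply: (Up_gr m0); apply: proj_gr.
by rewrite -(proj_map HU HG k gUp glin gd uw) ew (proj_self HG hq).
Qed.

Lemma annih k z : k <= 0 -> grG k z -> (forall u, grU 1 u -> brG z (g u) = 0) -> z = 0.
Proof.
move=> k0 hz hu; apply: pos0; first by apply: (hsum_gr HG hz).
move=> y /gsurj [w [uw <-]].
have [t [_ _ ew]] := decomp HU w.
have hP : forall m, Up (proj m w).
  move=> m; have [m0|m0] := lerP m 0; last by apply: (Up_gr m0); apply: proj_gr.
  by move/(hsumP HU): uw => ->; [apply: sub0; apply: Up_sub | rewrite /= -leNgt].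
rewrite ew (lin_sum _ Up_sub glin (fun m _ => hP m)).
rewrite (br_suml HG) big1 // => m _.
have [m0|m0] := lerP m 0.
  by move/(hsumP HU): uw => ->; [rewrite g0 (br0l HG) | rewrite /= -leNgt].
case: (gen_hom HU Huniv m0 (proj_gr HU m w)) => [h|->]; last by rewrite g0 (br0l HG).
elim: h {ew hP} => [u' hu'|k' a x' y' h1 IH1 h2 IH2|i' j x' y' h1 IH1 h2 IH2].
- by rewrite (br_skew HG (gdeg _ hu') hz) // hu // scaler0 oppr0.
- have [gx px] := hgen_gr HU h1; have [gy py] := hgen_gr HU h2.
  rewrite glin; [|exact: Up_gr gx|exact: Up_gr gy].
  by rewrite (br_linl HG) IH1 IH2 scaler0 addr0.
- have [gx px] := hgen_gr HU h1; have [gy py] := hgen_gr HU h2.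
  rewrite ghom; [|exact: Up_gr gx|exact: Up_gr gy].
  rewrite -(br_jac HG (gdeg px gx) (gdeg py gy) hz) IH1 IH2.
  by rewrite !(br0r HG) scaler0 subr0.
Qed.

Fixpoint C (n : nat) (t : U) (x : G) : Prop :=
  match n with
  | 0 => grU 1 t /\ g t = x
  | n'.+1 => [/\ grU (- n'%:Z) t, grG (- n'%:Z) x &
              forall u, grU 1 u -> C n' (brU t u) (brG x (g u))]
  end.

Lemma C_deg n t x : C n t x -> grU (1 - n%:Z) t /\ grG (1 - n%:Z) x.
Proof.
case: n => [[h <-]|n [h1 h2 _]].
  by rewrite subr0; split=> //; rewrite g1 //; apply: ideg.
by have -> : 1 - (n.+1)%:Z = - n%:Z by lia.
Qed.

Lemma C_lin n a t x t' x' : C n t x -> C n t' x' -> C n (a *: t + t') (a *: x + x').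
Proof.
elim: n a t x t' x' => [|n IH] a t x t' x' /=.
  move=> [h <-] [h' <-]; split; first by apply: (grD HU) => //; apply: (grZ HU).
  by rewrite glin //; apply: U1_Up.
move=> [h1 h2 h3] [h1' h2' h3']; split.
- by apply: (grD HU) => //; apply: (grZ HU).
- by apply: (grD HG) => //; apply: (grZ HG).
- by move=> u hu; rewrite (br_linl HU) (br_linl HG); apply: IH; [apply: h3|apply: h3'].
Qed.

Lemma C0 n : C n 0 0.
Proof.
elim: n => [|n IH] /=; first by split; [apply: (gr0 HU) | exact: g0].
split; [exact: (gr0 HU) | exact: (gr0 HG) |].
by move=> u _; rewrite (br0l HU) (br0l HG).
Qed.

Lemma C_fun n t x x' : C n t x -> C n t x' -> x = x'.
Proof.
elim: n t x x' => [|n IH] t x x' /=; first by move=> [_ <-] [_ <-].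
move=> [h1 h2 h3] [_ h2' h3']; apply/eqP; rewrite -subr_eq0; apply/eqP.
apply: (annih (k := - n%:Z)); first by lia.
  exact: (grB HG).
move=> u hu; rewrite (brBl HG) (IH _ _ _ (h3 u hu) (h3' u hu)); exact: subrr.
Qed.

Lemma C_inj n t t' x : C n t x -> C n t' x -> t = t'.
Proof.
elim: n t t' x => [|n IH] t t' x /=.
  by move=> [h e] [h' e']; apply: iinj => //; rewrite -!g1 // e e'.
move=> [h1 h2 h3] [h1' _ h3']; apply/eqP; rewrite -subr_eq0; apply/eqP.
have [H1 _] := Huniv; have [inj _] := H1 (- n%:Z) ltac:(lia).
apply: inj; first exact: (grB HU).
move=> u hu; rewrite (brBl HU) (IH _ _ _ (h3 u hu) (h3' u hu)); exact: subrr.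
Qed.

Lemma C_tot n x : grG (1 - n%:Z) x -> exists t, C n t x.
Proof.
elim: n x => [|n IH] x hx.
  rewrite subr0 in hx; have [u [hu e]] := isurj hx; exists u; split=> //; by rewrite g1.
have hx' : grG (- n%:Z) x by move: hx; have -> : 1 - (n.+1)%:Z = - n%:Z by lia.
have hb u : grU 1 u -> grG (1 - n%:Z) (brG x (g u)).
  move=> hu; have := gr_br HG hx' (gdeg ltr01 hu).
  by have -> : - n%:Z + 1 = 1 - n%:Z by lia.
pose phi u := epsilon (inhabits 0) (fun t => C n t (brG x (g u))).
have phiP u : grU 1 u -> C n (phi u) (brG x (g u)).
  move=> hu; rewrite /phi; apply: (epsilon_spec (inhabits 0) (fun t => C n t (brG x (g u)))).
  exact: IH (hb u hu).
have [H1 _] := Huniv; have [_ surj] := H1 (- n%:Z) ltac:(lia).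
have philin : lin_on (lsa_gr U 1) phi.
  move=> a u v hu hv.
  have huv : grU 1 (a *: u + v) by apply: (grD HU) => //; apply: (grZ HU).
  apply: (C_inj (phiP _ huv)).
  rewrite glin ?(br_linr HG); try apply: U1_Up => //.
  by apply: C_lin; apply: phiP.
have phideg : forall u, grU 1 u -> grU (- n%:Z + 1) (phi u).
  move=> u hu; have [h _] := C_deg (phiP u hu).
  by move: h; have -> : 1 - n%:Z = - n%:Z + 1 by lia.
have [t [ht et]] := surj phi philin phideg.
exists t; split=> // u hu; rewrite et //; exact: phiP.
Qed.

Lemma C_br L : forall n m a b x y, (1 <= n)%N -> (n + m = L.+1)%N ->
  C n a x -> C m b y -> C L (brU a b) (brG x y).
Proof.
elim: L => [|L IH] n m a b x y n1 e Ca Cb.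
  case: m e Cb => [|m] e Cb; last by lia.
  rewrite addn0 in e; subst n; move: Ca Cb => /= [_ _ h] [hb <-]; exact: h.
case: m e Cb => [|m] e Cb.
  rewrite addn0 in e; subst n; move: Ca Cb => /= [_ _ h] [hb <-]; exact: h.
have [ha hx] := C_deg Ca; have [hb hy] := C_deg Cb.
case: n n1 e Ca ha hx => [|n] // _ e Ca ha hx.
move: (Ca) (Cb) => /= [_ _ hCa] [_ _ hCb].
split.
- by have := gr_br HU ha hb; have -> : 1 - (n.+1)%:Z + (1 - (m.+1)%:Z) = - L%:Z by lia.
- by have := gr_br HG hx hy; have -> : 1 - (n.+1)%:Z + (1 - (m.+1)%:Z) = - L%:Z by lia.
move=> u hu; have hgu := gdeg ltr01 hu.
rewrite -(br_jac HU ha hb hu) -(br_jac HG hx hy hgu).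
have c1 : C L (brU a (brU b u)) (brG x (brG y (g u))).
  by apply: (IH n.+1 m) => //; [lia | apply: hCb].
have c2 : C L (brU b (brU a u)) (brG y (brG x (g u))).
  by apply: (IH m.+1 n) => //; [lia | apply: hCa].
have := C_lin (- ssign K (1 - (n.+1)%:Z) (1 - (m.+1)%:Z)) c2 c1.
by rewrite addrC [X in C _ _ X]addrC !scaleNr.
Qed.


Lemma levE k : k <= 0 -> 1 - (lev k)%:Z = k. Proof. rewrite /lev; lia. Qed.
Lemma lev1 k : k <= 0 -> (1 <= lev k)%N. Proof. rewrite /lev; lia. Qed.

Definition Sset v := forall k, k <= 0 -> exists x, C (lev k) (proj k v) x.
Definition Tset v := (forall k, 0 < k -> proj k v = 0) /\ Sset v.
Definition phi k t := if 0 < k then g t else epsilon (inhabits 0) (fun x => C (lev k) t x).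
Definition pi v := epsilon (inhabits 0) (fun y => forall k, proj k y = phi k (proj k v)).

Lemma phi_spec k t : k <= 0 -> (exists x, C (lev k) t x) -> C (lev k) t (phi k t).
Proof.
move=> k0 ex; rewrite /phi ifN; last by rewrite -leNgt.
exact: (epsilon_spec (inhabits 0) (fun x => C (lev k) t x)).
Qed.
Lemma phi_C k t x : k <= 0 -> C (lev k) t x -> phi k t = x.
Proof. by move=> k0 h; apply: (C_fun (phi_spec k0 _) h); exists x. Qed.
Lemma phi_pos k t : 0 < k -> phi k t = g t.
Proof. by move=> k0; rewrite /phi k0. Qed.
Lemma phi0 k : phi k 0 = 0.
Proof.
have [k0|k0] := lerP k 0; first exact: phi_C (C0 _).
by rewrite phi_pos // g0.
Qed.

Lemma C_gr k t x : k <= 0 -> C (lev k) t x -> grU k t /\ grG k x.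
Proof. by move=> k0 /C_deg; rewrite levE. Qed.

Lemma Sset_sub : subspace Sset.
Proof.
split; first by move=> k _; rewrite (proj0 HU); exists 0; exact: C0.
move=> a x y hx hy k k0; have [x1 c1] := hx k k0; have [y1 c2] := hy k k0.
by rewrite (proj_lin HU); exists (a *: x1 + y1); apply: C_lin.
Qed.

Lemma Sset_hom k c : grU k c -> (k <= 0 -> exists x, C (lev k) c x) -> Sset c.
Proof.
move=> hc h j j0; rewrite (proj_hom HU j hc); case: eqP => [e|_]; first by subst j; exact: h.
by exists 0; apply: C0.
Qed.

Lemma Sset_proj j v : Sset v -> Sset (proj j v).
Proof.
move=> hv; apply: (Sset_hom (proj_gr HU j v)) => j0.
by have := hv j j0.
Qed.

Lemma Sset_gr : graded_sub Sset.
Proof. apply: (graded_of_proj HU Sset_sub) => v k; exact: Sset_proj. Qed.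

Lemma S_char v : TplusUp Tset v <-> Sset v.
Proof.
split.
  case=> t [w [[_ ht] [hw ->]]] k k0; rewrite (projD HU).
  by move/(hsumP HU): hw => ->; [rewrite addr0; apply: ht | rewrite /= -leNgt].
move=> hv; have [s [us hs ev]] := decomp HU v.
exists (\sum_(m <- s) (if m <= 0 then proj m v else 0)).
exists (\sum_(m <- s) (if 0 < m then proj m v else 0)).
have gm (P : bool) m : grU m (if P then proj m v else 0).
  by case: P; [apply: (proj_gr HU) | apply: (gr0 HU)].
split; [split|split].
- move=> k k0; rewrite (projS HU) //; case: ifP => // _.
  by rewrite leNgt k0.
- move=> k k0; rewrite (projS HU) //; case: ifP => _; last by exists 0; apply: C0.
  by rewrite k0; apply: hv.
- apply/(hsumP HU) => k /= k0; rewrite (projS HU) //; case: ifP => // _.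
  by rewrite (negbTE k0).
- rewrite -big_split /= {1}ev; apply: eq_bigr => m _.
  by case: (lerP m 0) => _; rewrite ?addr0 ?add0r.
Qed.

Lemma pi_spec v : Sset v -> forall k, proj k (pi v) = phi k (proj k v).
Proof.
move=> hv; rewrite /pi; apply: (epsilon_spec (inhabits 0)
  (fun y => forall k, proj k y = phi k (proj k v))).
have [s [us hs ev]] := decomp HU v.
exists (\sum_(m <- s) phi m (proj m v)) => k.
rewrite (projS HG) //; last first.
  move=> m; have [m0|m0] := lerP m 0.
    by have [x cx] := hv m m0; rewrite (phi_C m0 cx); have [] := C_gr m0 cx.
  by rewrite phi_pos //; apply: gdeg => //; apply: (proj_gr HU).
by case: ifP => // /negbT /hs ->; rewrite phi0.
Qed.

Lemma pi_deg k x : Sset x -> grU k x -> grG k (pi x).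
Proof.
move=> hx gx; apply: (gr_of_proj HG) => j jk.
by rewrite pi_spec // (proj_other HU gx jk) phi0.
Qed.

Lemma pi_homE k c : Sset c -> grU k c -> pi c = phi k c.
Proof.
move=> hc gc; rewrite -(proj_self HG (pi_deg hc gc)) pi_spec //.
by rewrite (proj_self HU gc).
Qed.

Lemma pi_C k c : Sset c -> grU k c -> k <= 0 -> C (lev k) c (pi c).
Proof.
move=> hc gc k0; rewrite (pi_homE hc gc); apply: phi_spec => //.
by have := hc k k0; rewrite (proj_self HU gc).
Qed.

Lemma Sset_pos k c : 0 < k -> grU k c -> Sset c.
Proof. by move=> k0 gc; apply: (Sset_hom gc) => k0'; exfalso; move: k0; rewrite ltNge k0'. Qed.

Lemma pi_pos k c : 0 < k -> grU k c -> pi c = g c.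
Proof. by move=> k0 gc; rewrite (pi_homE (Sset_pos k0 gc) gc) phi_pos. Qed.

Lemma pi_lin : lin_on Sset pi.
Proof.
move=> a x y hx hy; have hxy : Sset (a *: x + y) by have [_ h] := Sset_sub; apply: h.
apply: (proj_ext HG) => k; rewrite (proj_lin HG) !pi_spec // (proj_lin HU).
have [k0|k0] := lerP k 0.
  have [x1 c1] := hx k k0; have [y1 c2] := hy k k0.
  by rewrite (phi_C k0 c1) (phi_C k0 c2); apply: phi_C => //; apply: C_lin.
rewrite !phi_pos // glin //; apply: (Up_gr k0); apply: (proj_gr HU).
Qed.

Lemma pi0 : pi 0 = 0. Proof. exact: lin0 pi_lin (sub0 Sset_sub). Qed.
Lemma piD x y : Sset x -> Sset y -> pi (x + y) = pi x + pi y.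
Proof. exact: linD pi_lin. Qed.
Lemma piZ a x : Sset x -> pi (a *: x) = a *: pi x.
Proof. by move=> hx; apply: linZ pi_lin (sub0 Sset_sub) hx. Qed.
Lemma piN x : Sset x -> pi (- x) = - pi x.
Proof. by move=> hx; rewrite -scaleN1r piZ // scaleN1r. Qed.
Lemma SsetD x y : Sset x -> Sset y -> Sset (x + y). Proof. exact: subD Sset_sub. Qed.
Lemma SsetZ a x : Sset x -> Sset (a *: x). Proof. exact: subZ Sset_sub. Qed.
Lemma SsetN x : Sset x -> Sset (- x). Proof. exact: subN Sset_sub. Qed.

Lemma mix kb b : hgen kb b -> forall k c, Sset c -> grU k c ->
  Sset (brU c b) /\ pi (brU c b) = brG (pi c) (g b).
Proof.
elim=> [u hu|k' a x y h1 IH1 h2 IH2|i' j x y h1 IH1 h2 IH2] k c hc gc.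
- have gcu := gr_br HU gc hu.
  have [k0|k0] := lerP k 0; last first.
    have k1 : 0 < k + 1 by apply: addr_gt0.
    split; first exact: Sset_pos k1 gcu.
    rewrite (pi_pos k1 gcu) (pi_pos k0 gc) ghom //; [exact: Up_gr k0 gc | exact: U1_Up].
  have Cc := pi_C hc gc k0.
  case E: (lev k) Cc => [|L] /=; first by move: (lev1 k0); rewrite E.
  move=> [_ _ /(_ u hu) CL].
  have [k1|k1] := lerP (k + 1) 0.
    have eL : lev (k + 1) = L by move: E; rewrite /lev; lia.
    have CL' : C (lev (k + 1)) (brU c u) (brG (pi c) (g u)) by rewrite eL.
    split; first by apply: (Sset_hom gcu) => _; exists (brG (pi c) (g u)).
    by rewrite (pi_homE _ gcu) ?(phi_C k1 CL') //; apply: (Sset_hom gcu) => _; eexists; exact: CL'.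
  have eL : L = 0%N by move: E k1; rewrite /lev; lia.
  move: CL; rewrite eL => /= [[hcu ecu]].
  split; first exact: Sset_pos ltr01 hcu.
  by rewrite (pi_pos ltr01 hcu).
- have [gx px] := hgen_gr HU h1; have [gy py] := hgen_gr HU h2.
  have [S1 e1] := IH1 k c hc gc; have [S2 e2] := IH2 k c hc gc.
  rewrite (br_linr HU); split; first by have [_ h] := Sset_sub; apply: h.
  rewrite pi_lin // e1 e2 glin; [|exact: Up_gr gx|exact: Up_gr gy].
  by rewrite (br_linr HG).
- have [gx px] := hgen_gr HU h1; have [gy py] := hgen_gr HU h2.
  have [Scx ecx] := IH1 k c hc gc.
  have hcx := gr_br HU gc gx.
  have [Scxy ecxy] := IH2 _ _ Scx hcx.
  have [Scy ecy] := IH2 k c hc gc.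
  have hcy := gr_br HU gc gy.
  have [Scyx ecyx] := IH1 _ _ Scy hcy.
  have eU : brU c (brU x y) = brU (brU c x) y + ssign K k i' *: (- (ssign K i' (k + j) *: brU (brU c y) x)).
    rewrite -(br_skew HU gx hcy) -(br_jac HU gc gx gy).
    by rewrite subrK.
  have hpc := pi_deg hc gc; have hgx := gdeg px gx; have hgy := gdeg py gy.
  rewrite eU; split; first by apply: SsetD => //; apply: SsetZ; apply: SsetN; apply: SsetZ.
  rewrite piD //; last by apply: SsetZ; apply: SsetN; apply: SsetZ.
  rewrite piZ; last by apply: SsetN; apply: SsetZ.
  rewrite piN; last by apply: SsetZ.
  rewrite piZ // ecxy ecx ecyx ecy.
  rewrite -(br_skew HG hgx (gr_br HG hpc hgy)) -(br_jac HG hpc hgx hgy) subrK.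
  by rewrite ghom //; [exact: Up_gr gx | exact: Up_gr gy].
Qed.

Lemma homog_br ka kb a b : Sset a -> Sset b -> grU ka a -> grU kb b ->
  Sset (brU a b) /\ pi (brU a b) = brG (pi a) (pi b).
Proof.
move=> Sa Sb ga gb.
have [kb0|kb0] := lerP kb 0; last first.
  case: (gen_hom HU Huniv kb0 gb) => [h|->].
    by have [S1 e1] := mix h Sa ga; split=> //; rewrite e1 (pi_pos kb0 gb).
  by rewrite (br0r HU) pi0 (br0r HG); split=> //; apply: sub0; apply: Sset_sub.
have [ka0|ka0] := lerP ka 0; last first.
  rewrite (br_skew HU ga gb) (br_skew HG (pi_deg Sa ga) (pi_deg Sb gb)).
  case: (gen_hom HU Huniv ka0 ga) => [h|->].
    have [S1 e1] := mix h Sb gb; split; first by apply: SsetN; apply: SsetZ.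
    by rewrite piN ?piZ //; [rewrite e1 (pi_pos ka0 ga) | apply: SsetZ].
  rewrite (br0r HU) pi0 (br0r HG) !scaler0 !oppr0; split; [apply: sub0; exact: Sset_sub | exact: pi0].
have Ca := pi_C Sa ga ka0; have Cb := pi_C Sb gb kb0.
have CL := C_br (L := (lev ka + lev kb).-1) (lev1 ka0) _ Ca Cb.
have eL : lev (ka + kb) = (lev ka + lev kb).-1 by rewrite /lev; lia.
have k0 : ka + kb <= 0 by lia.
have gab := gr_br HU ga gb.
have C' : C (lev (ka + kb)) (brU a b) (brG (pi a) (pi b)).
  by rewrite eL; apply: CL; move: (lev1 ka0); lia.
have Sab : Sset (brU a b) by apply: (Sset_hom gab) => _; eexists; exact: C'.
by split=> //; rewrite (pi_homE Sab gab) (phi_C k0 C').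
Qed.

Lemma SA_br x y : Sset x -> Sset y -> Sset (brU x y) /\ pi (brU x y) = brG (pi x) (pi y).
Proof.
move=> hx hy.
have [tx [_ _ ex]] := decomp HU x; have [ty [_ _ ey]] := decomp HU y.
have Px m : Sset (proj m x) by apply: Sset_proj.
have Py m : Sset (proj m y) by apply: Sset_proj.
have e : brU x y = \sum_(m <- tx) \sum_(n <- ty) brU (proj m x) (proj n y).
  rewrite {1}ex {1}ey (br_suml HU); apply: eq_bigr => m _; exact: (br_sumr HU).
have Sin m n : Sset (brU (proj m x) (proj n y)).
  by have [] := homog_br (Px m) (Py n) (proj_gr HU m x) (proj_gr HU n y).
have Ssum : Sset (brU x y).
  rewrite e; apply: sub_sum; first exact: Sset_sub; move=> m _.
  by apply: sub_sum; first exact: Sset_sub; move=> n _.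
split=> //.
have pxE : pi x = \sum_(m <- tx) pi (proj m x).
  by rewrite {1}ex (lin_sum _ Sset_sub pi_lin (fun m _ => Px m)).
have pyE : pi y = \sum_(n <- ty) pi (proj n y).
  by rewrite {1}ey (lin_sum _ Sset_sub pi_lin (fun n _ => Py n)).
rewrite pxE pyE e (lin_sum _ Sset_sub pi_lin); last first.
  by move=> m _; apply: sub_sum; first exact: Sset_sub; move=> n _.
rewrite (br_suml HG); apply: eq_bigr => m _.
rewrite (lin_sum _ Sset_sub pi_lin (fun n _ => Sin m n)) (br_sumr HG).
apply: eq_bigr => n _.
by have [] := homog_br (Px m) (Py n) (proj_gr HU m x) (proj_gr HU n y).
Qed.

Definition Dset v := Sset v /\ pi v = 0.

Lemma partA_sec : exists T D : U -> Prop,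
  [/\ good_T T, ideal_in (TplusUp T) D,
      forall v, D v -> hsum U (fun k => 2 <= k) v &
      quot_iso (TplusUp T) D G].
Proof.
have eqS : TplusUp Tset = Sset.
  by apply: functional_extensionality => v; apply: propositional_extensionality; exact: S_char.
exists Tset, Dset; rewrite eqS; split.
- split.
  + apply: (graded_of_proj HU).
      split; first by split; [move=> k _; apply: (proj0 HU) | apply: (sub0 Sset_sub)].
      move=> a x y [hx1 hx2] [hy1 hy2]; split; last by have [_ h] := Sset_sub; apply: h.
      by move=> k k0; rewrite (proj_lin HU) hx1 // hy1 // scaler0 addr0.
    move=> v k [h1 h2]; split; last exact: Sset_proj.
    by move=> j j0; rewrite (proj_proj HU); case: eqP => // e; subst j; apply: h1.
  + move=> v [h1 _]; apply/(hsumP HU) => k /= k0; apply: h1; by rewrite ltNge.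
  + rewrite eqS; split; first exact: Sset_gr.
    by move=> x y hx hy; have [] := SA_br hx hy.
- split; [|split; [|split]].
  + apply: (graded_of_proj HU).
      split; first by split; [apply: (sub0 Sset_sub) | exact: pi0].
      move=> a x y [hx px] [hy py]; split; first by have [_ h] := Sset_sub; apply: h.
      by rewrite pi_lin // px py scaler0 addr0.
    move=> v k [hv pv]; split; first exact: Sset_proj.
    by rewrite (pi_homE (Sset_proj k hv) (proj_gr HU k v)) -pi_spec // pv (proj0 HG).
  + by move=> x [].
  + move=> x y hx [hy py]; have [S1 e1] := SA_br hx hy; split=> //.
    by rewrite e1 py (br0r HG).
  + move=> x y [hx px] hy; have [S1 e1] := SA_br hx hy; split=> //.
    by rewrite e1 px (br0l HG).
- move=> v [hv pv]; apply/(hsumP HU) => k /= k2.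
  have e0 : phi k (proj k v) = 0 by rewrite -pi_spec // pv (proj0 HG).
  have [k0|k0] := lerP k 0.
    have [x cx] := hv k k0; rewrite (phi_C k0 cx) in e0; subst x.
    exact: C_inj cx (C0 _).
  have ek : k = 1 by lia.
  subst k; rewrite phi_pos // g1 in e0; last exact: (proj_gr HU).
  apply: iinj; [exact: (proj_gr HU) | exact: (gr0 HU) |].
  by rewrite e0 -g1 ?g0 //; apply: (gr0 HU).
- exists pi; split.
  + exact: pi_lin.
  + by move=> k x hx gx; apply: pi_deg.
  + by move=> x y hx hy; have [] := SA_br hx hy.
  + move=> q.
    pose Ppre m t := [/\ grU m t, phi m t = proj m q & (m <= 0 -> C (lev m) t (proj m q))].
    pose pre m := epsilon (inhabits 0) (Ppre m).
    have preP m : Ppre m (pre m).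
      rewrite /pre; apply: (epsilon_spec (inhabits 0) (Ppre m)).
      have [m0|m0] := lerP m 0.
        have hq : grG (1 - (lev m)%:Z) (proj m q) by rewrite levE //; exact: (proj_gr HG m q).
        have [t ct] := C_tot hq.
        by exists t; split=> //; [have [] := C_gr m0 ct | exact: phi_C ct].
      have [w [hw ew]] := gsurj_hom m0 (proj_gr HG m q).
      by exists w; split=> //; [rewrite phi_pos | move=> m0'; exfalso; move: m0; rewrite ltNge m0'].
    have [s [us hs eq]] := decomp HG q.
    have Spre m : Sset (pre m).
      have [gm em cm] := preP m; apply: (Sset_hom gm) => m0; eexists; exact: cm m0.
    exists (\sum_(m <- s) pre m); split.
      by apply: sub_sum; first exact: Sset_sub; move=> m _.
    apply: (proj_ext HG) => k; rewrite pi_spec; last first.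
      by apply: sub_sum; first exact: Sset_sub; move=> m _.
    rewrite (projS HU) //; last by move=> m; have [] := preP m.
    case: ifP => [_|/negbT ks]; first by have [] := preP k.
    by rewrite phi0 hs.
  + by move=> x hx; split=> [e|[]].
Qed.

End PartA.

Unset Implicit Arguments.

Theorem theorem3p5 (K : numFieldType) (U : lsalg K) :
  is_lsalg U -> universal U ->
  (* (a) *)
  (forall G : lsalg K,
     is_lsalg G -> pos0trans G -> gen_deg1 G -> iso_deg1 U G ->
     exists T D : U -> Prop,
       [/\ good_T T, ideal_in (TplusUp T) D,
           forall v, D v -> hsum U (fun k => 2 <= k) v &
           quot_iso (TplusUp T) D G]) /\
  (* (b) *)
  (forall T D : U -> Prop,
     good_T T -> ideal_in (TplusUp T) D ->
     (forall v, D v -> hsum U (fun k => 2 <= k) v) ->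
     forall Q : lsalg K, is_lsalg Q -> quot_iso (TplusUp T) D Q ->
       pos0trans Q /\ gen_deg1 Q).
Proof.
move=> HU Huniv; split.
- move=> G HG pos0 gen1 [i [ilin ideg iinj isurj]].
  have [_ H2] := Huniv.
  have [g [g1 glin ghom _]] := H2 G HG i ilin ideg.
  by eapply partA_sec; eassumption.
- move=> T D gT iD Dpos Q HQ qi.
  exact: (partB HU Huniv gT Dpos HQ qi).
Qed.
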